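(* For all $n,k\in\mathbb Z$, the sum of the weights of all hybrid lattice paths from $(0,0)$ to $(k,n-k)$ equals $\binom{n}{k}_w$.
   Context: Let $(w(s,t))_{s,t\in\mathbb Z}$ be commuting invertible variables, $W(s,t)=\prod_{j=1}^t w(s,j)$, with the product convention $\prod_{j=l}^m A_j=A_l\cdots A_m$ if $m>l-1$, $=1$ if $m=l-1$, $=A_{l-1}^{-1}\cdots A_{m+1}^{-1}$ if $m<l-1$. The coefficients $\binom{n}{k}_w$ ($n,k\in\mathbb Z$) are the unique family with $\binom{n}{0}_w=\binom{n}{n}_w=1$ for all $n$ and $\binom{n+1}{k}_w=\binom{n}{k}_w+\binom{n}{k-1}_w W(k,n+1-k)$ whenever $(n+1,k)\ne(0,0)$. Hybrid lattice paths from $(0,0)$ to $(N,M)\in\mathbb Z^2$: (i) if $N,M\ge0$, sequences of unit north steps and east steps; (ii) if $N\ge 0>M$, sequences of moves each of which is either a single south step or an east–south combination (an east step immediately followed by a south step), the first move being a south step; (iii) if $N<0\le M$, sequences of moves each of which is either a single west step or a north–west combination (a north step immediately followed by a west step), the first move being a west step; (iv) if $N,M<0$, there are no paths. Weights: each single north or south step has weight $1$; an east step $(s-1,t)\to(s,t)$ has weight $W(s,t)$; a west step $(s,t)\to(s-1,t)$ has weight $W(s,t)^{-1}$; an east–south combination $(s-1,t)\to(s,t)\to(s,t-1)$ has weight $-W(s,t)$; a north–west combination $(s,t-1)\to(s,t)\to(s-1,t)$ has weight $-W(s,t)^{-1}$. The weight of a path is the product of the weights of its steps/moves (the empty path to $(0,0)$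 has weight $1$). *)

(* Defs.v *)
From HB Require Import structures.
From mathcomp Require Import all_boot all_order all_algebra.
Set Implicit Arguments. Unset Strict Implicit. Unset Printing Implicit Defensive.
Import Order.TTheory GRing.Theory Num.Theory.
Local Open Scope ring_scope.

Inductive move := mN | mE | mS | mES | mW | mNW.

Definition move_to_nat (m : move) : nat :=
  match m with mN => 0 | mE => 1 | mS => 2 | mES => 3 | mW => 4 | mNW => 5 end%N.
Definition nat_to_move (n : nat) : option move :=
  match n with 0 => Some mN | 1 => Some mE | 2 => Some mS | 3 => Some mES
  | 4 => Some mW | 5 => Some mNW | _ => None end%N.
Lemma move_natK : pcancel move_to_nat nat_to_move. Proof. by case. Qed.
HB.instance Definition _ := Countable.copy move (pcan_type move_natK).
Definition move_enum := [:: mN; mE; mS; mES; mW; mNW].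
Lemma move_enumP : Finite.axiom move_enum. Proof. by case. Qed.
HB.instance Definition _ := isFinite.Build move move_enumP.

Section Weights.
Variable R : comUnitRingType.
Variable w : int -> int -> R.

(* W(s,t) = prod_{j=1}^t w(s,j) with the product convention:
   t >= 1 : w(s,1)...w(s,t);  t = 0 : 1;  t < 0 : w(s,0)^-1 ... w(s,t+1)^-1 *)
Definition Wst (s t : int) : R :=
  if (0 <= t)%R then \prod_(1 <= j < `|t|%N.+1) w s (j%:Z)
  else \prod_(0 <= i < `|t|%N) (w s (- (i%:Z)))^-1.

Definition move_step (p : int * int) (m : move) : (int * int) * R :=
  let: (x, y) := p in
  match m with
  | mN => ((x, y + 1), 1)
  | mE => ((x + 1, y), Wst (x + 1) y)
  | mS => ((x, y - 1), 1)
  | mES => ((x + 1, y - 1), - Wst (x + 1) y)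
  | mW => ((x - 1, y), (Wst x y)^-1)
  | mNW => ((x - 1, y + 1), - (Wst x (y + 1))^-1)
  end.

Fixpoint walk (p : int * int) (s : seq move) : (int * int) * R :=
  match s with
  | [::] => (p, 1)
  | m :: s' => let: (q, a) := move_step p m in
               let: (r, b) := walk q s' in (r, a * b)
  end.

Definition path_end (s : seq move) : int * int := (walk (0, 0) s).1.
Definition path_weight (s : seq move) : R := (walk (0, 0) s).2.
End Weights.

Definition endpoint (s : seq move) : int * int :=
  path_end (fun _ _ => 0 : int) s.

Definition hybrid_path (N M : int) (s : seq move) : bool :=
  (endpoint s == (N, M)) &&
  if (0 <= N) && (0 <= M) then all (fun m => (m == mN) || (m == mE)) s
  else if (0 <= N) && (M < 0) then
    all (fun m => (m == mS) || (m == mES)) s && (head mN s == mS)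
  else if (N < 0) && (0 <= M) then
    all (fun m => (m == mW) || (m == mNW)) s && (head mN s == mW)
  else false.

(* Every move changes
   |x|+|y| by at least 1, so hybrid paths have length <= |N|+|M|; each path is
   counted exactly once as a tuple of its length. *)
Definition hybrid_sum (R : comUnitRingType) (w : int -> int -> R) (N M : int) : R :=
  \sum_(L < (`|N| + `|M|).+1)
     \sum_(t : L.-tuple move | hybrid_path N M t) path_weight w t.

(* Main.v *)
Require Import Defs.
From HB Require Import structures.
From mathcomp Require Import all_boot all_order all_algebra zify ring.
Import Order.TTheory GRing.Theory Num.Theory.
Local Open Scope ring_scope.

Lemma walk_rcons (R : comUnitRingType) (w : int -> int -> R) p s m :
  walk w p (rcons s m) =
  ((move_step w (walk w p s).1 m).1, (walk w p s).2 * (move_step w (walk w p s).1 m).2).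
Proof.
elim: s p => [|m' s IH] p /=.
  by case: (move_step w p m) => q a; rewrite mul1r mulr1.
case: (move_step w p m') => q a; rewrite IH.
by case: (walk w q s) => r b /=; rewrite mulrA.
Qed.

Lemma step_fst (R R' : comUnitRingType) (w : int -> int -> R) (w' : int -> int -> R') p m :
  (move_step w p m).1 = (move_step w' p m).1.
Proof. by case: m; case: p. Qed.

Lemma walk_fst (R R' : comUnitRingType) (w : int -> int -> R) (w' : int -> int -> R') p s :
  (walk w p s).1 = (walk w' p s).1.
Proof.
elim: s p => [|m s IH] p //=.
have E := step_fst _ _ w w' p m.
case: (move_step w p m) E => q a; case: (move_step w' p m) => q' a' /= <-.
have := IH q; case: (walk w q s) => r b; case: (walk w' q s) => r' b' /= ->.
by [].
Qed.

Lemma endpoint_rcons s m :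
  endpoint (rcons s m) = (move_step (fun _ _ => 0 : int) (endpoint s) m).1.
Proof. by rewrite /endpoint /path_end walk_rcons. Qed.

Lemma weight_rcons (R : comUnitRingType) (w : int -> int -> R) s m :
  path_weight w (rcons s m) = path_weight w s * (move_step w (endpoint s) m).2.
Proof.
rewrite /path_weight walk_rcons /endpoint /path_end /=.
by rewrite (walk_fst _ _ w (fun _ _ => 0 : int)).
Qed.

Lemma sum_move (R : comUnitRingType) (F : move -> R) :
  \sum_(m : move) F m = F mN + F mE + F mS + F mES + F mW + F mNW.
Proof. by rewrite /index_enum !unlock /= addr0 !addrA. Qed.

Lemma sum_rcons (R : comUnitRingType) (L : nat) (P : pred (seq move)) (F : seq move -> R) :
  \sum_(t : L.+1.-tuple move | P t) F t =
  \sum_(m : move) \sum_(t : L.-tuple move | P (rcons t m)) F (rcons t m).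
Proof.
rewrite pair_big_dep /=.
pose h (p : move * L.-tuple move) := [tuple of rcons p.2 p.1].
pose g (t : L.+1.-tuple move) : move * L.-tuple move :=
  (last (thead t) (behead t), [tuple of belast (thead t) (behead_tuple t)]).
rewrite (reindex h) /=; last first.
  exists g => [[m t] _ | t _]; rewrite /g /h /=.
    apply/eqP; rewrite xpair_eqE; apply/andP; split.
      case: t => [[|x s] Hs] //=; by rewrite last_rcons.
    apply/eqP/val_inj => /=. case: t => [[|x s] Hs] //=.
    by rewrite belast_rcons.
  apply/val_inj => /=. case: t => [[|x s] Hs] //=.
  by rewrite -lastI.
by [].
Qed.

Definition isEN m := (m == mN) || (m == mE).
Definition isSES m := (m == mS) || (m == mES).
Definition isWNW m := (m == mW) || (m == mNW).

Lemma len_EN s : all isEN s ->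
  (endpoint s).1 + (endpoint s).2 = (size s)%:Z /\ 0 <= (endpoint s).1 /\ 0 <= (endpoint s).2.
Proof.
elim/last_ind: s => [|s m IH] //.
rewrite all_rcons endpoint_rcons size_rcons => /andP[hm /IH].
case: (endpoint s) => x y /=.
by case: m hm => //= _ [h1 [h2 h3]]; lia.
Qed.

Lemma len_SES s : all isSES s ->
  (endpoint s).2 = - (size s)%:Z /\ 0 <= (endpoint s).1.
Proof.
elim/last_ind: s => [|s m IH] //.
rewrite all_rcons endpoint_rcons size_rcons => /andP[hm /IH].
case: (endpoint s) => x y /=.
by case: m hm => //= _ [h1 h2]; lia.
Qed.

Lemma len_WNW s : all isWNW s ->
  (endpoint s).1 = - (size s)%:Z /\ 0 <= (endpoint s).2.
Proof.
elim/last_ind: s => [|s m IH] //.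
rewrite all_rcons endpoint_rcons size_rcons => /andP[hm /IH].
case: (endpoint s) => x y /=.
by case: m hm => //= _ [h1 h2]; lia.
Qed.

Definition ell (N M : int) : nat :=
  if (0 <= N) && (0 <= M) then (`|N| + `|M|)%N
  else if (0 <= N) then `|M|%N else `|N|%N.

Lemma hp_size N M s : hybrid_path N M s -> size s = ell N M.
Proof.
rewrite /hybrid_path /ell => /andP[/eqP E].
case: ifP => [/andP[h1 h2] /len_EN | _].
  rewrite E /= => -[h _]; lia.
case: ifP => [/andP[h1 h2] /andP[/len_SES] | _].
  rewrite E /= h1 => -[h _] _; lia.
case: ifP => [/andP[h1 h2] /andP[/len_WNW] | //].
rewrite E /= => -[h _] _. have -> : (0 <= N) = false by lia. lia.
Qed.

Lemma hsum_eq (R : comUnitRingType) (w : int -> int -> R) N M L : L = ell N M ->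
  hybrid_sum w N M = \sum_(t : L.-tuple move | hybrid_path N M t) path_weight w t.
Proof.
move=> ->.
have lt : (ell N M < (`|N| + `|M|).+1)%N by rewrite /ell; case: ifP => _; [|case: ifP => _]; lia.
rewrite /hybrid_sum (bigD1 (Ordinal lt)) //= [X in _ + X]big1 ?addr0 // => i /eqP ne.
apply: big1 => t /hp_size; rewrite size_tuple => E.
by exfalso; apply: ne; apply: val_inj.
Qed.

Lemma eq_shift (a b c : int) : (a + c == b) = (a == b - c).
Proof. by apply/eqP/eqP; lia. Qed.

Lemma head_rcons_nz (s : seq move) m : (0 < size s)%N -> head mN (rcons s m) = head mN s.
Proof. by case: s. Qed.

Section Main.
Variable R : comUnitRingType.
Variable w : int -> int -> R.
Local Notation P := (hybrid_sum w).

Lemma term_eq L (Pr Q : pred (seq move)) m c :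
  (forall t : L.-tuple move, Pr (rcons t m) = Q t) ->
  (forall t : L.-tuple move, Q t -> (move_step w (endpoint t) m).2 = c) ->
  \sum_(t : L.-tuple move | Pr (rcons t m)) path_weight w (rcons t m) =
  (\sum_(t : L.-tuple move | Q t) path_weight w t) * c.
Proof.
move=> hP hc; rewrite mulr_suml; apply: eq_big => // t Qt.
by rewrite weight_rcons hc -?hP.
Qed.

Lemma term0 L (Pr : pred (seq move)) m :
  (forall t : L.-tuple move, Pr (rcons t m) = false) ->
  \sum_(t : L.-tuple move | Pr (rcons t m)) path_weight w (rcons t m) = 0.
Proof. by move=> h; apply: big_pred0. Qed.

Lemma sum0 (Pr : pred (0.-tuple move)) (F : 0.-tuple move -> R) :
  \sum_(t : 0.-tuple move | Pr t) F t = if Pr [tuple] then F [tuple] else 0.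
Proof.
case h: (Pr [tuple]).
  by rewrite (big_pred1 [tuple]) // => t; rewrite [t]tuple0 h; apply/esym/eqP.
by apply: big_pred0 => t; rewrite [t]tuple0.
Qed.

Lemma P00 : P 0 0 = 1.
Proof. by rewrite (hsum_eq _ w 0 0 0) // sum0. Qed.

Lemma P0m1 : P 0 (-1) = 1.
Proof.
rewrite (hsum_eq _ w 0 (-1) 1) // sum_rcons sum_move !sum0 /=.
by rewrite /path_weight /= !add0r !addr0 mulr1.
Qed.

Lemma Pm10 : P (-1) 0 = 1.
Proof.
rewrite (hsum_eq _ w (-1) 0 1) // sum_rcons sum_move !sum0 /=.
rewrite /path_weight /= !add0r !addr0 mulr1.
by rewrite /Wst /= big_geq // invr1.
Qed.

Lemma Wst0 s : Wst w s 0 = 1.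
Proof. by rewrite /Wst /= big_geq. Qed.

Lemma Z1 M : 0 < M -> P (-1) M = 0.
Proof.
move=> hM; have hM' : 0 <= M by lia.
rewrite (hsum_eq _ w (-1) M 1); last by rewrite /ell /=.
apply: big_pred0 => -[[|x []] //= _].
rewrite /hybrid_path /= hM' /=.
case: x => //=; rewrite /endpoint /path_end /= ?xpair_eqE ?andbT ?andbF //.
by apply/negbTE/negP => /andP[/eqP ? /eqP ?]; lia.
Qed.

Lemma Z2 N : 0 < N -> P N (-1) = 0.
Proof.
move=> hN; have hN' : 0 <= N by lia.
rewrite (hsum_eq _ w N (-1) 1); last by rewrite /ell /= hN' /=.
apply: big_pred0 => -[[|x []] //= _].
rewrite /hybrid_path /= hN' /=.
case: x => //=; rewrite /endpoint /path_end /= ?xpair_eqE ?andbT ?andbF //.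
by apply/negbTE/eqP; lia.
Qed.

Lemma Z3 N M : N < 0 -> M < 0 -> P N M = 0.
Proof.
move=> hN hM; rewrite /hybrid_sum big1 // => i _; apply: big_pred0 => t.
rewrite /hybrid_path.
have -> : (0 <= N) = false by lia.
have -> : (0 <= M) = false by lia.
by case: (N < 0); case: (M < 0); rewrite /= ?andbF.
Qed.


Lemma hp1 N M s : 0 <= N -> 0 <= M ->
  hybrid_path N M s = (endpoint s == (N, M)) && all isEN s.
Proof. by move=> hN hM; rewrite /hybrid_path hN hM. Qed.

Lemma hp2 N M s : 0 <= N -> M < 0 ->
  hybrid_path N M s = (endpoint s == (N, M)) && (all isSES s && (head mN s == mS)).
Proof.
move=> hN hM; rewrite /hybrid_path hN hM.
by have -> : (0 <= M) = false by lia.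
Qed.

Lemma hp3 N M s : N < 0 -> 0 <= M ->
  hybrid_path N M s = (endpoint s == (N, M)) && (all isWNW s && (head mN s == mW)).
Proof.
move=> hN hM; rewrite /hybrid_path hN hM.
by have -> : (0 <= N) = false by lia.
Qed.

Lemma reg1 N M : 0 <= N -> 0 <= M -> (N, M) != (0, 0) ->
  P N M = P N (M - 1) + P (N - 1) M * Wst w N M.
Proof.
move=> hN hM nz.
have nz' : 0 < N + M.
  by move: nz; rewrite xpair_eqE negb_and => /orP[] /eqP ?; lia.
set L := (`|N| + `|M| - 1)%N.
rewrite (hsum_eq _ w N M L.+1); last by rewrite /ell hN hM /= /L; lia.
rewrite sum_rcons sum_move.
have z : forall m, isEN m = false -> 
  \sum_(t : L.-tuple move | hybrid_path N M (rcons t m)) path_weight w (rcons t m) = 0.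
  by move=> m hm; apply: term0 => t; rewrite hp1 // all_rcons hm andbF.
rewrite (z mS) // (z mES) // (z mW) // (z mNW) // !addr0.
congr (_ + _).
  have [M0|Mpos] : M = 0 \/ 0 < M by lia.
    subst M; rewrite sub0r Z2; last by lia.
    apply: term0 => t; rewrite hp1 // all_rcons endpoint_rcons /=.
    have := @len_EN t; case: (endpoint t) => x y /= h.
    rewrite xpair_eqE; apply/negbTE/negP => /andP[/andP[/eqP ? /eqP ?] /h [_ [_ ?]]]; lia.
  have hM1 : 0 <= M - 1 by lia.
  rewrite (hsum_eq _ w N (M - 1) L); last by rewrite /ell hN hM1 /L /=; lia.
  rewrite -[RHS]mulr1; apply: term_eq => t.
    rewrite hp1 // hp1 //.
    rewrite all_rcons endpoint_rcons /=; case: (endpoint t) => x y /=.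
    rewrite !xpair_eqE; congr (_ && _); congr (_ && _); apply/eqP/eqP; lia.
  by case: (endpoint t).
have [N0|Npos] : N = 0 \/ 0 < N by lia.
  subst N; rewrite sub0r Z1 ?mul0r; last by lia.
  apply: term0 => t; rewrite hp1 // all_rcons endpoint_rcons /=.
  have := @len_EN t; case: (endpoint t) => x y /= h.
  rewrite xpair_eqE; apply/negbTE/negP => /andP[/andP[/eqP ? /eqP ?] /h [_ [? _]]]; lia.
have hN1 : 0 <= N - 1 by lia.
rewrite (hsum_eq _ w (N - 1) M L); last by rewrite /ell hN1 hM /L /=; lia.
apply: term_eq => t.
  rewrite hp1 // hp1 //.
  rewrite all_rcons endpoint_rcons /=; case: (endpoint t) => x y /=.
  rewrite !xpair_eqE; congr (_ && _); congr (_ && _); apply/eqP/eqP; lia.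
rewrite hp1 //.
case/andP => /eqP -> _ /=; by rewrite subrK.
Qed.

Lemma Wst_unit (wu : forall s t, w s t \is a GRing.unit) s t : Wst w s t \is a GRing.unit.
Proof.
rewrite /Wst; case: ifP => _; apply: unitr_prod => i _; first exact: wu.
by rewrite unitrV; exact: wu.
Qed.

Lemma reg2 N M : 0 <= N -> M < 0 ->
  P N M = P N (M - 1) + P (N - 1) M * Wst w N M.
Proof.
move=> hN hM.
have hM1 : M - 1 < 0 by lia.
set L := `|M|%N.
have key : P N (M - 1) = P N M * 1 + P (N - 1) M * (- Wst w N M).
  have hL : ell N (M - 1) = L.+1.
    rewrite /ell hN /=; have -> : (0 <= M - 1) = false by lia.
    rewrite /L; lia.
  rewrite (hsum_eq _ w N (M - 1) L.+1) // sum_rcons sum_move.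
  have z : forall m, isSES m = false -> 
    \sum_(t : L.-tuple move | hybrid_path N (M - 1) (rcons t m)) path_weight w (rcons t m) = 0.
    by move=> m hm; apply: term0 => t; rewrite hp2 // all_rcons hm /= andbF.
  rewrite (z mN) // (z mE) // (z mW) // (z mNW) // !addr0 add0r.
  have hL0 : (0 < L)%N by rewrite /L; lia.
  congr (_ + _).
    rewrite (hsum_eq _ w N M L); last by rewrite /ell hN /=; have -> : (0 <= M) = false by lia.
    apply: term_eq => t; last by case: (endpoint t).
    rewrite hp2 // hp2 // all_rcons endpoint_rcons head_rcons_nz ?size_tuple //.
    case: (endpoint t) => x y /=; rewrite !xpair_eqE.
    congr (_ && _); congr (_ && _); apply/eqP/eqP; lia.
  have [N0|Npos] : N = 0 \/ 0 < N by lia.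
    subst N; rewrite sub0r Z3 ?mul0r //.
    apply: term0 => t; rewrite hp2 // all_rcons endpoint_rcons /=.
    have := @len_SES t; case: (endpoint t) => x y /= h.
    rewrite xpair_eqE; apply/negbTE/negP => /andP[/andP[/eqP ? /eqP ?] /andP[/h [_ ?] _]]; lia.
  have hN1 : 0 <= N - 1 by lia.
  rewrite (hsum_eq _ w (N - 1) M L); last by rewrite /ell hN1 /=; have -> : (0 <= M) = false by lia.
  apply: term_eq => t.
    rewrite hp2 // hp2 // all_rcons endpoint_rcons head_rcons_nz ?size_tuple //.
    case: (endpoint t) => x y /=; rewrite !xpair_eqE.
    congr (_ && _); congr (_ && _); apply/eqP/eqP; lia.
  rewrite hp2 //; case/andP => /eqP -> _ /=; by rewrite subrK.
by rewrite key mulr1 mulrN subrK.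
Qed.

Lemma reg3 (wu : forall s t, w s t \is a GRing.unit) N M : N < 0 -> 0 <= M ->
  P N M = P N (M - 1) + P (N - 1) M * Wst w N M.
Proof.
move=> hN hM.
have hN1 : N - 1 < 0 by lia.
set L := `|N|%N.
have key : P (N - 1) M = P N M * (Wst w N M)^-1 + P N (M - 1) * (- (Wst w N M)^-1).
  have hL : ell (N - 1) M = L.+1.
    rewrite /ell /=; have -> : (0 <= N - 1) = false by lia.
    rewrite /L /=; lia.
  rewrite (hsum_eq _ w (N - 1) M L.+1) // sum_rcons sum_move.
  have z : forall m, isWNW m = false -> 
    \sum_(t : L.-tuple move | hybrid_path (N - 1) M (rcons t m)) path_weight w (rcons t m) = 0.
    by move=> m hm; apply: term0 => t; rewrite hp3 // all_rcons hm /= andbF.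
  rewrite (z mN) // (z mE) // (z mS) // (z mES) // !add0r.
  have hL0 : (0 < L)%N by rewrite /L; lia.
  congr (_ + _).
    rewrite (hsum_eq _ w N M L); last by rewrite /ell /=; have -> : (0 <= N) = false by lia.
    apply: term_eq => t; last by rewrite hp3 //; case/andP => /eqP -> _.
    rewrite hp3 // hp3 // all_rcons endpoint_rcons head_rcons_nz ?size_tuple //.
    case: (endpoint t) => x y /=; rewrite !xpair_eqE.
    congr (_ && _); congr (_ && _); apply/eqP/eqP; lia.
  have [M0|Mpos] : M = 0 \/ 0 < M by lia.
    subst M; rewrite sub0r Z3 ?mul0r //.
    apply: term0 => t; rewrite hp3 // all_rcons endpoint_rcons /=.
    have := @len_WNW t; case: (endpoint t) => x y /= h.
    rewrite xpair_eqE; apply/negbTE/negP => /andP[/andP[/eqP ? /eqP ?] /andP[/h [_ ?] _]]; lia.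
  have hM1 : 0 <= M - 1 by lia.
  rewrite (hsum_eq _ w N (M - 1) L); last by rewrite /ell /=; have -> : (0 <= N) = false by lia.
  apply: term_eq => t.
    rewrite hp3 // hp3 // all_rcons endpoint_rcons head_rcons_nz ?size_tuple //.
    case: (endpoint t) => x y /=; rewrite !xpair_eqE.
    congr (_ && _); congr (_ && _); apply/eqP/eqP; lia.
  rewrite hp3 //; case/andP => /eqP -> _ /=; by rewrite subrK.
have u := Wst_unit wu N M.
rewrite key mulrDl mulrN mulNr !mulrVK //.
by rewrite addrC subrK.
Qed.

Lemma rec (wu : forall s t, w s t \is a GRing.unit) N M : (N, M) != (0, 0) ->
  P N M = P N (M - 1) + P (N - 1) M * Wst w N M.
Proof.
move=> nz.
have [hN|hN] : 0 <= N \/ N < 0 by lia.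
  have [hM|hM] : 0 <= M \/ M < 0 by lia.
    exact: reg1.
  exact: reg2.
have [hM|hM] : 0 <= M \/ M < 0 by lia.
  exact: reg3.
rewrite !Z3 ?mul0r ?addr0 //; lia.
Qed.

Lemma P0M (wu : forall s t, w s t \is a GRing.unit) M : P 0 M = 1.
Proof.
case: M => i.
  elim: i => [|i IH]; first exact: P00.
  rewrite (rec wu); last by rewrite xpair_eqE; apply/negP => /andP[_ /eqP]; lia.
  rewrite sub0r Z1 ?mul0r ?addr0; last by lia.
  by have -> : (Posz i.+1) - 1 = Posz i by lia.
rewrite NegzE; elim: i => [|i IH]; first exact: P0m1.
move: IH; rewrite (rec wu); last by rewrite xpair_eqE; apply/negP => /andP[_ /eqP]; lia.
rewrite sub0r (Z3 (-1)) ?mul0r ?addr0 //.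
by have -> : - (Posz i.+1) - 1 = - (Posz i.+2) by lia.
Qed.

Lemma PN0 (wu : forall s t, w s t \is a GRing.unit) N : P N 0 = 1.
Proof.
case: N => i.
  elim: i => [|i IH]; first exact: P00.
  rewrite (rec wu); last by rewrite xpair_eqE; apply/negP => /andP[/eqP ? _]; lia.
  rewrite sub0r Z2 ?add0r ?Wst0 ?mulr1; last by lia.
  by have -> : (Posz i.+1) - 1 = Posz i by lia.
rewrite NegzE; elim: i => [|i IH]; first exact: Pm10.
move: IH; rewrite (rec wu); last by rewrite xpair_eqE; apply/negP => /andP[/eqP ? _]; lia.
rewrite sub0r (Z3 _ (-1)) ?add0r ?Wst0 ?mulr1 //.
by have -> : - (Posz i.+1) - 1 = - (Posz i.+2) by lia.
Qed.

End Main.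

Lemma shift_zero (R : comUnitRingType) (f : int -> R) c :
  (forall n, f (n + 1) = f n) -> f c = 0 -> forall n, f n = 0.
Proof.
move=> hf hc.
have H : forall j : nat, f (c + j%:Z) = 0 /\ f (c - j%:Z) = 0.
  elim=> [|j [IH1 IH2]].
    have e1 : c + (0%N)%:Z = c by lia.
    have e2 : c - (0%N)%:Z = c by lia.
    by split; rewrite ?oppr0 addr0.
  split.
    rewrite (_ : c + (j.+1)%:Z = (c + j%:Z) + 1); [by rewrite hf | lia].
  rewrite -IH2 (_ : c - j%:Z = (c - (j.+1)%:Z) + 1); [by rewrite hf | lia].
move=> n; have [le|lt] : c <= n \/ n < c by lia.
  rewrite (_ : n = c + (`|n - c|%N)%:Z); [by case: (H `|n - c|%N) | lia].
rewrite (_ : n = c - (`|n - c|%N)%:Z); [by case: (H `|n - c|%N) | lia].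
Qed.

Theorem theorem4 (R : comUnitRingType) (w : int -> int -> R)
  (w_unit : forall s t, w s t \is a GRing.unit)
  (binw : int -> int -> R)
  (binw_n0 : forall n, binw n 0 = 1)
  (binw_nn : forall n, binw n n = 1)
  (binw_rec : forall n k, (n + 1, k) != (0, 0) ->
       binw (n + 1) k = binw n k + binw n (k - 1) * Wst w k (n + 1 - k)) :
  forall n k : int, hybrid_sum w k (n - k) = binw n k.
Proof.
pose d n k := hybrid_sum w k (n - k) - binw n k.
have d0 : forall n, d n 0 = 0.
  by move=> n; rewrite /d subr0 P0M // binw_n0 subrr.
have dn : forall n, d n n = 0.
  by move=> n; rewrite /d subrr PN0 // binw_nn subrr.
have drec : forall n k, (n + 1, k) != (0, 0) ->
    d (n + 1) k = d n k + d n (k - 1) * Wst w k (n + 1 - k).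
  move=> n k nz; rewrite /d binw_rec // (rec _ w w_unit); last first.
    move: nz; rewrite !xpair_eqE !negb_and => nz; apply/orP.
    case: (eqVneq k 0) => [k0|kn0]; last by left.
    right; move: nz; rewrite k0 eqxx orbF => /eqP ?; apply/eqP; lia.
  have -> : n + 1 - k - 1 = n - k by lia.
  have -> : n - (k - 1) = n + 1 - k by lia.
  ring.
have colp : forall i : nat, forall n, d n i%:Z = 0.
  elim=> [|i IH]; first exact: d0.
  apply: (shift_zero _ (fun n => d n (i.+1)%:Z) (i.+1)%:Z _ (dn _)) => n /=.
  rewrite drec; last by rewrite xpair_eqE; apply/negP => /andP[_ /eqP]; lia.
  have -> : (i.+1)%:Z - 1 = i%:Z by lia.
  by rewrite IH mul0r addr0.
have coln : forall i : nat, forall n, d n (- i%:Z) = 0.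
  elim=> [|i IH]; first by move=> n; rewrite oppr0 d0.
  move=> n; have -> : - (i.+1)%:Z = - i%:Z - 1 by lia.
  case: (eqVneq (n + 1, - i%:Z) (0, 0)) => [E|nz].
    case: E => ? ?.
    have -> : n = -1 by lia.
    have -> : - i%:Z - 1 = -1 by lia.
    exact: dn.
  have := drec n _ nz; rewrite !IH add0r => /esym h.
  have u := Wst_unit _ w w_unit (- i%:Z) (n + 1 - - i%:Z).
  by rewrite -(mulrK u (d n _)) h mul0r.
move=> n k; apply/eqP; rewrite -subr_eq0; apply/eqP.
case: k => i; first exact: colp.
by rewrite NegzE; exact: coln.
Qed.
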